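(* Let $G$ be a finite $p$-group with trivial Schur multiplier $\mathrm{H}^2(G,\mathbb{C}^\times)=1$ and $|Z(G)|=p$. Then $G$ has no faithful irreducible projective representation (so $\tau_{irr}(G)$ does not exist), and $\tau(G)=\delta(G)+1$.
   Context: A projective representation of $G$ is an $\alpha$-representation for some cocycle $\alpha$: a map $\rho:G\to\mathrm{GL}_n(\mathbb{C})$ with $\rho(1)=I$ and $\rho(g)\rho(h)=\alpha(g,h)\rho(gh)$; it is faithful if the only $g$ with $\rho(g)$ scalar is $g=1$. $\tau(G)$ is the least degree of a faithful projective representation; $\tau_{irr}(G)$ the least degree of a faithful irreducible projective representation (if one exists); $\delta(G)$ the least degree of a faithful ordinary representation. *)

(* Defs.v *)
From mathcomp Require Import all_boot all_order all_algebra all_fingroup all_solvable all_field all_character.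
Set Implicit Arguments. Unset Strict Implicit. Unset Printing Implicit Defensive.
Import GRing.Theory Num.Theory.
Local Open Scope ring_scope.

Section Proj.
Variables (gT : finGroupType) (G : {group gT}).

Definition cocycle (alpha : gT -> gT -> algC) :=
  (forall g h, g \in G -> h \in G -> alpha g h != 0) /\
  (forall g h k, g \in G -> h \in G -> k \in G ->
     alpha g h * alpha (g * h)%g k = alpha g (h * k)%g * alpha h k).

Definition schur_trivial :=
  forall alpha, cocycle alpha ->
    exists mu : gT -> algC,
      (forall g, g \in G -> mu g != 0) /\
      (forall g h, g \in G -> h \in G ->
         alpha g h = mu g * mu h / mu (g * h)%g).

Definition proj_rep n (alpha : gT -> gT -> algC) (rho : gT -> 'M[algC]_n) :=
  [/\ cocycle alpha, rho 1%g = 1%:M,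
      (forall g, g \in G -> rho g \in unitmx) &
      (forall g h, g \in G -> h \in G ->
         rho g *m rho h = alpha g h *: rho (g * h)%g)].

Definition proj_faithful n (rho : gT -> 'M[algC]_n) :=
  forall g, g \in G -> is_scalar_mx (rho g) -> g = 1%g.

(* irreducible: the whole space is nonzero and has no proper nonzero
   subspace stable under all rho g (same convention as mx_irreducible) *)
Definition proj_irreducible n (rho : gT -> 'M[algC]_n) :=
  (1%:M : 'M[algC]_n) != 0 /\
  forall U : 'M[algC]_n,
    (forall g, g \in G -> (U *m rho g <= U)%MS) -> U != 0 -> (1%:M <= U)%MS.

Definition has_faithful_proj n :=
  exists (alpha : gT -> gT -> algC) (rho : gT -> 'M[algC]_n),
    proj_rep alpha rho /\ proj_faithful rho.

Definition has_faithful_rep n :=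
  exists rG : mx_representation algC G n, mx_faithful rG.

End Proj.

Definition least_nat (P : nat -> Prop) (m : nat) := P m /\ forall k, P k -> (m <= k)%N.

(* Main.v *)
Require Import Defs.
From mathcomp Require Import all_boot all_order all_algebra all_fingroup all_solvable all_field all_character.
From Stdlib Require Import Classical_Prop.
From mathcomp Require Import ring.
Set Implicit Arguments. Unset Strict Implicit. Unset Printing Implicit Defensive.
Import GRing.Theory Num.Theory.
Local Open Scope ring_scope.

Lemma least_ex (P : nat -> Prop) n : P n -> exists m, least_nat P m.
Proof.
elim/ltn_ind: n => n IH Pn.
case: (classic (exists k, (k < n)%N /\ P k)) => [[k [lt Pk]] | H].
  exact: IH lt Pk.
exists n; split=> // k Pk; rewrite leqNgt; apply/negP => lt; apply: H; eauto.
Qed.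

Lemma linearize (gT : finGroupType) (G : {group gT}) n alpha (rho : gT -> 'M[algC]_n) :
  schur_trivial G -> proj_rep G alpha rho ->
  exists (rG : mx_representation algC G n) (c : gT -> algC),
    forall g, g \in G -> c g != 0 /\ rho g = c g *: rG g.
Proof.
move=> sT [coc rho1 _ rhoM].
have [mu [mu0 amu]] := sT alpha coc.
have r1 : (mu 1%g)^-1 *: rho 1%g = 1%:M.
  have h := rhoM 1%g 1%g (group1 G) (group1 G).
  rewrite rho1 mul1mx mulg1 in h.
  rewrite amu ?group1 // mulg1 -mulrA divff ?mulr1 ?mu0 ?group1 // in h.
  by rewrite rho1 {1}h scalerA mulVf ?scale1r ?mu0 ?group1.
have rM : {in G &, {morph (fun g => (mu g)^-1 *: rho g) : x y / (x * y)%g >-> x *m y}}.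
  move=> x y Gx Gy /=.
  rewrite -scalemxAl -scalemxAr rhoM // scalerA scalerA amu //.
  congr (_ *: _).
  have := mu0 _ Gx; have := mu0 _ Gy; have := mu0 _ (groupM Gx Gy).
  move: (mu x) (mu y) (mu (x * y)%g) => a b c c0 b0 a0.
  by field; rewrite a0 b0 c0.
exists (MxRepresentation (conj r1 rM)), mu => g Gg; split; first exact: mu0.
by rewrite /= scalerA divff ?scale1r ?mu0.
Qed.
Lemma eig_module (gT : finGroupType) (G : {group gT}) n
  (rG : mx_representation algC G n.+1) (A : 'M[algC]_n.+1) :
  (forall g, g \in G -> A *m rG g = rG g *m A) -> ~~ is_scalar_mx A ->
  exists l, [/\ kermx (A - l%:M) != 0, mxmodule rG (kermx (A - l%:M)),
     ~~ (1%:M <= kermx (A - l%:M))%MS & kermx (A - l%:M) *m A = l *: kermx (A - l%:M)].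
Proof.
move=> cA nsA.
have [l rl] : exists l, root (char_poly A) l.
  by apply/closed_rootP; rewrite size_char_poly.
exists l; split.
- by rewrite -eigenvalue_root_char in rl.
- apply/mxmoduleP => g Gg; rewrite sub_kermx -mulmxA mulmxBr -cA // scalar_mxC -mulmxBl.
  by rewrite mulmxA mulmx_ker mul0mx.
- rewrite sub_kermx mul1mx subr_eq0; apply: contra nsA => /eqP ->.
  exact: scalar_mx_is_scalar.
- apply/eqP; rewrite -subr_eq0 -mul_mx_scalar -mulmxBr; exact/eqP/mulmx_ker.
Qed.

Lemma sub_module (gT : finGroupType) (G : {group gT}) n (p : nat)
  (rG : mx_representation algC G n.+1) (A : 'M[algC]_n.+1) :
  (0 < p)%N -> A ^+ p = 1 ->
  (forall g, g \in G -> A *m rG g = rG g *m A) -> ~~ is_scalar_mx A ->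
  exists U : 'M[algC]_n.+1, [/\ mxmodule rG U, (\rank U < n.+1)%N & U *m A != U].
Proof.
move=> p0 Ap cA nsA.
set B := A - 1%:M.
have B0 : B != 0.
  rewrite subr_eq0; apply: contra nsA => /eqP ->; exact: scalar_mx_is_scalar.
case: (boolP (B \in unitmx)) => Bu.
  have [l [U0 Um Uf UA]] := eig_module cA nsA.
  exists (kermx (A - l%:M)); split => //.
    rewrite ltn_neqAle rank_leq_row andbT; apply: contra Uf => /eqP h.
    by rewrite sub1mx /row_full h.
  rewrite UA; apply: contra U0 => /eqP h.
  have : kermx (A - l%:M) *m B = 0.
    by rewrite mulmxBr UA h mulmx1 subrr.
  move/(congr1 (mulmx^~ (invmx B))); rewrite -mulmxA mulmxV // mulmx1 mul0mx => ->.
  by [].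
exists B; split.
- apply/mxmoduleP => g Gg.
  have -> : B *m rG g = rG g *m B.
    by rewrite /B mulmxBl mulmxBr cA // mul1mx mulmx1.
  exact: submxMl.
- rewrite ltn_neqAle rank_leq_row andbT; apply: contra Bu => /eqP h.
  by rewrite -row_full_unit /row_full h.
- apply/negP => /eqP BA.
  have BB : B * B = 0 by rewrite -mulmxE {1}/B mulmxBr BA mulmx1 subrr.
  have pw k : (1 + B) ^+ k = 1 + B *+ k.
    elim: k => [|k IH]; first by rewrite expr0 mulr0n addr0.
    rewrite exprSr IH mulrDl mul1r mulrDr mulr1 mulrnAl BB mul0rn addr0 mulrS; exact: (esym (addrA _ _ _)).
  have : B *+ p = 0.
    have e : A = 1 + B by rewrite /B addrC subrK.
    by move: Ap; rewrite e pw => h; apply: (addrI 1); rewrite addr0.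
  move/eqP; rewrite -scaler_nat scaler_eq0 pnatr_eq0 (negPf B0) orbF.
  by move/eqP => p00; move: p0; rewrite p00.
Qed.

Unset Implicit Arguments.
Theorem lemma4p2 (gT : finGroupType) (G : {group gT}) (p : nat) :
  prime p -> (p.-group G)%g -> schur_trivial G -> #|'Z(G)|%g = p ->
  (forall n (alpha : gT -> gT -> algC) (rho : gT -> 'M[algC]_n),
      proj_rep G alpha rho -> proj_faithful G rho -> ~ proj_irreducible G rho)
  /\ (exists d, least_nat (has_faithful_rep G) d /\
                least_nat (has_faithful_proj G) d.+1).
Proof.
move=> pr pG sT Zcard.
have [z Zz nz1] : exists2 z, z \in ('Z(G))%g & z != 1%g.
  by apply/trivgPn; rewrite trivg_card1 Zcard; case: eqP pr => // ->.
have [Gz cz] := centerP _ _ Zz.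
have cA n (rG : mx_representation algC G n) g : g \in G -> rG z *m rG g = rG g *m rG z.
  by move=> Gg; rewrite -!repr_mxM // cz.
have key n alpha (rho : gT -> 'M[algC]_n) : proj_rep G alpha rho -> proj_faithful G rho ->
    exists (rG : mx_representation algC G n) (c : gT -> algC),
    (forall g, g \in G -> c g != 0 /\ rho g = c g *: rG g) /\ ~~ is_scalar_mx (rG z).
  move=> prh pf; have [rG [c hc]] := linearize sT prh.
  exists rG, c; split => //; apply/negP => /is_scalar_mxP [a ea]; move/negP: nz1; apply; apply/eqP.
  by apply: (pf z Gz); rewrite (hc z Gz).2 ea scale_scalar_mx scalar_mx_is_scalar.
split.
  move=> n alpha rho prh pf [ne1 irr].
  have [rG [c [hc nsc]]] := key n alpha rho prh pf.
  case: n rho prh pf ne1 irr rG hc nsc => [|n] rho prh pf ne1 irr rG hc nsc.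
    by move: nsc; rewrite /is_scalar_mx insubF.
  have [l [U0 Um Uf _]] := eig_module (cA _ rG) nsc.
  move/negP: Uf; apply; apply: (irr _ _ U0) => g Gg.
  by rewrite (hc g Gg).2 -scalemxAr scalemx_sub // (mxmoduleP Um g Gg).
have [d [Pd mind]] := @least_ex (has_faithful_rep G) _ (ex_intro _ (regular_repr algC G) (regular_mx_faithful algC G)).
exists d; split => //; split.
  case: Pd => rG fr.
  pose rho g : 'M[algC]_(1 + d) := block_mx (1%:M : 'M_1) 0 0 (rG g).
  have rhoM : {in G &, forall x y, rho x *m rho y = rho (x * y)%g}.
    move=> x y Gx Gy; rewrite /rho mulmx_block !mulmx0 !mul0mx !mul1mx !addr0 !add0r.
    by rewrite repr_mxM.
  have rho1 : rho 1%g = 1%:M by rewrite /rho repr_mx1 -scalar_mx_block.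
  exists (fun _ _ => 1), rho; split.
    split.
    - by split => [g h _ _ | g h k _ _ _]; rewrite ?oner_neq0 ?mul1r.
    - exact: rho1.
    - move=> g Gg; have := rhoM g g^-1%g Gg (groupVr Gg).
      by rewrite mulgV rho1 => /mulmx1_unit [].
    - by move=> g h Gg Gh; rewrite scale1r rhoM.
  move=> g Gg /is_scalar_mxP [a].
  rewrite /rho (scalar_mx_block 1 d) => /(congr1 (fun M : 'M[algC]_(1+d) => (ulsubmx M, drsubmx M))) /=.
  rewrite !block_mxKul !block_mxKdr => -[h1 h2].
  have a1 : a = 1 by have := congr1 (fun M : 'M[algC]_1 => M ord0 ord0) h1; rewrite !mxE.
  have : g \in rker rG by apply/rkerP; split => //; rewrite h2 a1.
  by move/(subsetP fr); rewrite inE => /eqP.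
move=> k [alpha [rho [prh pf]]].
have [rG [c [hc nsc]]] := key k alpha rho prh pf.
case: k rho prh pf rG hc nsc => [|k] rho prh pf rG hc nsc.
  by move: nsc; rewrite /is_scalar_mx insubF.
have Ap : rG z ^+ p = 1.
  by rewrite -(repr_mxX rG p Gz) -Zcard expg_cardG // repr_mx1.
have [U [Um rk nz]] := sub_module (prime_gt0 pr) Ap (cA _ rG) nsc.
have fU : mx_faithful (submod_repr Um).
  rewrite /mx_faithful.
  have -> : rker (submod_repr Um) :=: 1%g.
    apply: TI_center_nil (pgroup_nil pG) (rker_normal _) _.
    rewrite setIC prime_TIg ?Zcard //.
    apply/negP => /subsetP /(_ z Zz). change (z \in rker (submod_repr Um) -> False); rewrite rker_submod inE Gz /=.
    by rewrite (negPf nz).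
  exact: subxx.
by apply: leq_ltn_trans rk; apply: mind; exists (submod_repr Um).
Qed.
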